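(* LFI3 is a sublogic of LFI1: for every set of formulas $\Gamma$ and formula $\alpha$, if $\Gamma\vDash_{LFI3}\alpha$ then $\Gamma\vDash_{LFI1}\alpha$.
   Context: Formulas are built from a countable set of propositional variables using unary $\neg,\circ$ and binary $\land,\lor,\to$. On $\{0,1\}$ use Boolean $\land,\lor,\to,\sim$. Let $\mathbb{B}=\{x\in\{0,1\}^3: x_1\lor x_2=1,\ x_3\lor\sim(x_1\land x_2)=1\}=\{T,t,b,f,F\}$ with $T=(1,0,0)$, $t=(1,0,1)$, $b=(1,1,1)$, $f=(0,1,1)$, $F=(0,1,0)$. The LFI3 algebra on $\mathbb{B}$ has operations: $a\dot\land b=(a_1\land b_1,\ a_2\lor b_2,\ (\sim a_2\land b_3)\lor(a_3\land\sim b_2)\lor(a_3\land b_3))$; $a\dot\lor b=(a_1\lor b_1,\ a_2\land b_2,\ (\sim a_1\land b_3)\lor(a_3\land\sim b_1)\lor(a_3\land b_3))$; $a\dot\to b=(a_1\to b_1,\ b_2\land(\sim a_2\lor a_3),\ (\sim a_2\land b_3)\lor(\sim a_2\land a_3\land\sim b_1)\lor(a_3\land b_3)\lor(\sim a_1\land a_3\land\sim b_1))$; $\dot\neg a=(a_2,a_1,a_3)$; $\dot\circ a=(\sim(a_1\land a_2),a_3,a_3\land\sim(a_1\land a_2))$. Designated set $D=\{T,t,b\}$. $\vDash_{LFI3}$ is the consequence relation of this matrix (valuations are homomorphisms; $\Gamma\vDash\alpha$ iff every valuation designating all of $\Gamma$ designates $\alpha$). LFI1 is the three-valued matrix logic on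 $\{1,\frac12,0\}$ with designated set $\{1,\frac12\}$, $\land=\min$, $\lor=\max$ (order $0<\frac12<1$), $a\to c=1$ if $a=0$ and $a\to c=c$ otherwise, $\neg1=0$, $\neg\frac12=\frac12$, $\neg0=1$, $\circ1=\circ0=1$, $\circ\frac12=0$; $\vDash_{LFI1}$ is its matrix consequence relation. *)

(* Defs.v *)
From Stdlib Require Import Bool.

Inductive form : Type :=
| Var : nat -> form
| Neg : form -> form
| Circ : form -> form
| And : form -> form -> form
| Or : form -> form -> form
| Imp : form -> form -> form.

Definition trip := (bool * bool * bool)%type.
Definition p1 (a : trip) : bool := fst (fst a).
Definition p2 (a : trip) : bool := snd (fst a).
Definition p3 (a : trip) : bool := snd a.
Definition bimp (x y : bool) : bool := implb x y.

Definition inB (x : trip) : Prop :=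
  (p1 x || p2 x) = true /\ (p3 x || negb (p1 x && p2 x)) = true.

Definition T3 : trip := (true, false, false).
Definition t3 : trip := (true, false, true).
Definition b3 : trip := (true, true, true).
Definition f3 : trip := (false, true, true).
Definition F3 : trip := (false, true, false).

Definition and3 (a b : trip) : trip :=
  (p1 a && p1 b, p2 a || p2 b,
   (negb (p2 a) && p3 b) || (p3 a && negb (p2 b)) || (p3 a && p3 b)).
Definition or3 (a b : trip) : trip :=
  (p1 a || p1 b, p2 a && p2 b,
   (negb (p1 a) && p3 b) || (p3 a && negb (p1 b)) || (p3 a && p3 b)).
Definition imp3 (a b : trip) : trip :=
  (bimp (p1 a) (p1 b), p2 b && (negb (p2 a) || p3 a),
   (negb (p2 a) && p3 b) || (negb (p2 a) && p3 a && negb (p1 b))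
   || (p3 a && p3 b) || (negb (p1 a) && p3 a && negb (p1 b))).
Definition neg3 (a : trip) : trip := (p2 a, p1 a, p3 a).
Definition circ3 (a : trip) : trip :=
  (negb (p1 a && p2 a), p3 a, p3 a && negb (p1 a && p2 a)).

Fixpoint eval3 (p : nat -> trip) (phi : form) : trip :=
  match phi with
  | Var n => p n
  | Neg a => neg3 (eval3 p a)
  | Circ a => circ3 (eval3 p a)
  | And a b => and3 (eval3 p a) (eval3 p b)
  | Or a b => or3 (eval3 p a) (eval3 p b)
  | Imp a b => imp3 (eval3 p a) (eval3 p b)
  end.

Definition designated3 (x : trip) : Prop := x = T3 \/ x = t3 \/ x = b3.

(* Valuations are homomorphisms form -> B; these are exactly eval3 p for
   assignments p of variables into B. *)
Definition conseq_LFI3 (Gamma : form -> Prop) (alpha : form) : Prop :=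
  forall p : nat -> trip, (forall n, inB (p n)) ->
    (forall g, Gamma g -> designated3 (eval3 p g)) ->
    designated3 (eval3 p alpha).

Inductive V1 : Type := one | half | zero.

Definition rank1 (x : V1) : nat := match x with zero => 0 | half => 1 | one => 2 end.
Definition min1 (x y : V1) : V1 := if Nat.leb (rank1 x) (rank1 y) then x else y.
Definition max1 (x y : V1) : V1 := if Nat.leb (rank1 x) (rank1 y) then y else x.
Definition imp1 (x y : V1) : V1 := match x with zero => one | _ => y end.
Definition neg1 (x : V1) : V1 := match x with one => zero | half => half | zero => one end.
Definition circ1 (x : V1) : V1 := match x with half => zero | _ => one end.

Fixpoint eval1 (p : nat -> V1) (phi : form) : V1 :=
  match phi with
  | Var n => p n
  | Neg a => neg1 (eval1 p a)
  | Circ a => circ1 (eval1 p a)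
  | And a b => min1 (eval1 p a) (eval1 p b)
  | Or a b => max1 (eval1 p a) (eval1 p b)
  | Imp a b => imp1 (eval1 p a) (eval1 p b)
  end.

Definition designated1 (x : V1) : Prop := x = one \/ x = half.

Definition conseq_LFI1 (Gamma : form -> Prop) (alpha : form) : Prop :=
  forall p : nat -> V1,
    (forall g, Gamma g -> designated1 (eval1 p g)) ->
    designated1 (eval1 p alpha).

(* Main.v *)
Require Import Defs.

Definition h (x : V1) : trip :=
  match x with one => T3 | half => b3 | zero => F3 end.

Lemma h_eval : forall p phi, eval3 (fun n => h (p n)) phi = h (eval1 p phi).
Proof.
  intros p phi; induction phi; simpl;
  repeat match goal with H : _ = _ |- _ => rewrite H; clear H end;
  try reflexivity;
  repeat match goal with |- context [eval1 p ?a] => destruct (eval1 p a) end;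
  reflexivity.
Qed.

Lemma h_des : forall x, designated3 (h x) <-> designated1 x.
Proof.
  intros []; unfold designated3, designated1; simpl; split; intro H;
  try (intuition discriminate); try (left; reflexivity); try (right; reflexivity);
  try (right; right; reflexivity).
Qed.

Theorem theorem13 : forall (Gamma : form -> Prop) (alpha : form),
  conseq_LFI3 Gamma alpha -> conseq_LFI1 Gamma alpha.
Proof.
  intros Gamma alpha H p Hg.
  apply h_des. rewrite <- h_eval. apply H.
  - intro n; destruct (p n); split; reflexivity.
  - intros g Hgg. rewrite h_eval. apply h_des. auto.
Qed.
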